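(* Let $\mu$ be a Borel probability measure on $\mathbb{T}^n$ and let $(B_1,\dots,B_n)$ be an $n$-tuple of matrices in $M_n(\mathbb{Z})$ which is strongly independent over $\mathbb{Q}$. If there is a nonzero $k\in\mathbb{Z}^{n\times 1}$ such that $\hat\mu(B_ik)=1$ for every $1\le i\le n$, then $\mu$ is finitely supported.
   Context: For $k=(k_1,\dots,k_n)^T\in\mathbb{Z}^{n\times 1}$ and $z=(z_1,\dots,z_n)\in\mathbb{T}^n$, $z^k=z_1^{k_1}\cdots z_n^{k_n}$ and $\hat\mu(k)=\int_{\mathbb{T}^n}z^k\,d\mu(z)$. An $n$-tuple $(B_1,\dots,B_n)$ of integer $n\times n$ matrices is strongly independent over $\mathbb{Q}$ if for every nonzero $v\in\mathbb{Q}^{n\times 1}$ the vectors $B_1v,\dots,B_nv$ are linearly independent over $\mathbb{Q}$. *)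

(* Defs.v *)
From HB Require Import structures.
From mathcomp Require Import all_boot all_order all_algebra.
From mathcomp Require Import all_classical all_reals all_analysis.
Set Implicit Arguments. Unset Strict Implicit. Unset Printing Implicit Defensive.
Import Order.TTheory GRing.Theory Num.Theory.
Import numFieldNormedType.Exports.
Local Open Scope classical_set_scope.
Local Open Scope ring_scope.

(* Model of the torus T^n: R^n (column vectors) with its Borel sigma-algebra;
   a point x of R^n represents z = (exp(2 pi i x_1), ..., exp(2 pi i x_n)).
   Borel probability measures on T^n are identified with Borel probability
   measures on R^n concentrated on the fundamental domain [0,1)^n. *)
Notation borelRn R n := (g_sigma_algebraType (@open 'cV[R]_n)).

Definition fund_domain (R : realType) (n : nat) : set (borelRn R n) :=
  [set x | forall j : 'I_n, 0 <= x j 0 < 1].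

(* k . x = sum_j k_j x_j, so that z^k = exp(2 pi i (k . x)). *)
Definition kdot (R : realType) (n : nat) (k : 'cV[int]_n) (x : 'cV[R]_n) : R :=
  \sum_(j < n) (k j 0)%:~R * x j 0.

(* Real and imaginary parts of the Fourier coefficient
   hat mu(k) = \int z^k dmu(z). *)
Definition fourier_re (R : realType) (n : nat)
  (mu : probability (borelRn R n) R) (k : 'cV[int]_n) : \bar R :=
  (\int[mu]_x (cos (2 * pi * kdot k x))%:E)%E.

Definition fourier_im (R : realType) (n : nat)
  (mu : probability (borelRn R n) R) (k : 'cV[int]_n) : \bar R :=
  (\int[mu]_x (sin (2 * pi * kdot k x))%:E)%E.

Definition fourier_eq1 (R : realType) (n : nat)
  (mu : probability (borelRn R n) R) (k : 'cV[int]_n) : Prop :=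
  fourier_re mu k = 1%E /\ fourier_im mu k = 0%E.

Definition int_to_rat_mx (m p : nat) (A : 'M[int]_(m, p)) : 'M[rat]_(m, p) :=
  map_mx (fun z : int => z%:~R) A.

Definition strongly_independent (n : nat) (B : 'I_n -> 'M[int]_n) : Prop :=
  forall v : 'cV[rat]_n, v != 0 ->
    free [seq int_to_rat_mx (B i) *m v | i <- enum 'I_n].

Definition finitely_supported (R : realType) (n : nat)
  (mu : probability (borelRn R n) R) : Prop :=
  exists S : seq 'cV[R]_n, mu [set` S] = 1%E.

(* Main.v *)
Require Import Defs.
From HB Require Import structures.
From mathcomp Require Import all_boot all_order all_algebra.
From mathcomp Require Import all_classical all_reals all_analysis.
From mathcomp Require Import measurable_realfun.
From mathcomp Require Import ring lra.
Set Implicit Arguments. Unset Strict Implicit. Unset Printing Implicit Defensive.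
Import Order.TTheory GRing.Theory Num.Theory.
Import numFieldNormedType.Exports.
Local Open Scope classical_set_scope.
Local Open Scope ring_scope.

Section S.
Variable R : realType.

Lemma two_pi : (2 : R) * pi = pi *+ 2.
Proof. by rewrite mulr_natl. Qed.

Lemma cosDint (x : R) (m : int) : cos (x + pi *+ 2 * m%:~R) = cos x.
Proof.
case: m => m.
  by rewrite -[(Posz m)%:~R]/(m%:R) mulr_natr (periodicn (@cosD2pi R)).
rewrite NegzE mulrNz mulrN -[(Posz m.+1)%:~R]/(m.+1%:R) mulr_natr.
by rewrite -{2}[x](subrK ((pi *+ 2) *+ m.+1)) (periodicn (@cosD2pi R)).
Qed.

Lemma cos2pi_eq1 (t : R) : cos (2 * pi * t) = 1 -> exists z : int, t = z%:~R.
Proof.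
move=> h; exists (Num.floor t).
set z := Num.floor t.
have [f [f0 f1 tE]] : exists f : R, [/\ 0 <= f, f < 1 & t = f + z%:~R].
  exists (t - z%:~R); split; last by rewrite subrK.
    by rewrite subr_ge0 floor_le.
  by rewrite ltrBlDl; have := floorD1_gt t; rewrite intrD.
rewrite tE in h *.
have hf : cos (2 * pi * f) = 1.
  transitivity (cos (2 * pi * (f + z%:~R))); last exact: h.
  by rewrite two_pi (mulrDr (pi *+ 2)) cosDint.
have pi0 := pi_gt0 R.
have key : forall u : R, 0 <= u -> 2 * u <= 1 -> cos (2 * pi * u) = 1 -> u = 0.
  move=> u u0 u1 hu.
  have : 2 * pi * u = 0.
    apply: cos_inj; rewrite ?cos0 // !in_itv /= ?lexx /=; last exact: ltW.
    have h1 : 0 <= pi * u by apply: mulr_ge0; [exact: ltW|lra].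
    have h2 : 0 <= pi * (1 - 2 * u) by apply: mulr_ge0; [exact: ltW|lra].
    apply/andP; split; nra.
  move/eqP; rewrite !mulf_eq0 (negbTE (lt0r_neq0 pi0)) pnatr_eq0 /= => /eqP //.

have [fle|fgt] := lerP (2 * f) 1.
  by rewrite (key f) ?add0r.
have : 1 - f = 0.
  apply: key; [lra|lra|].
  transitivity (cos (2 * pi * f)); last exact: hf.
  rewrite -[RHS]cosN -[RHS](cosDint _ 1); congr cos.
  rewrite !two_pi; lra.
lra.
Qed.
End S.
Section M.
Variables (R : realType) (n : nat).

Lemma cont_meas (f : 'cV[R]_n -> R) : continuous f ->
  measurable_fun (setT : set (borelRn R n)) f.
Proof.
move=> cf; apply: (measurability _ (RGenOpens.measurableE R)).
move=> _ [_ [a [b ->]] <-]; rewrite setTI; apply: sub_sigma_algebra.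
exact/(continuousP f).1/interval_open.
Qed.

Lemma meas_coord (j : 'I_n) :
  measurable_fun (setT : set (borelRn R n)) (fun x : 'cV[R]_n => x j 0).
Proof. apply: cont_meas; exact: (@coord_continuous R n 1 j 0). Qed.

Lemma meas_kdot (k : 'cV[int]_n) :
  measurable_fun (setT : set (borelRn R n)) (@kdot R n k).
Proof.
rewrite /kdot; apply: measurable_sum => j.
by apply: measurable_funM; [exact: measurable_cst|exact: meas_coord].
Qed.

Lemma meas_cos (k : 'cV[int]_n) :
  measurable_fun (setT : set (borelRn R n)) (fun x => cos (2 * pi * kdot k x)).
Proof.
have m2 : measurable_fun (setT : set (borelRn R n)) (fun x => 2 * pi * kdot k x).
  by apply: measurable_funM; [exact: measurable_cst|exact: meas_kdot].
exact: (measurableT_comp (continuous_measurable_fun (@continuous_cos R)) m2).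
Qed.

Lemma ae_int (mu : probability (borelRn R n) R) (k : 'cV[int]_n) :
  fourier_re mu k = 1%E ->
  {ae mu, forall x, exists z : int, kdot k x = z%:~R}.
Proof.
rewrite /fourier_re => h.
pose g := fun x : borelRn R n => cos (2 * pi * kdot k x).
have mg : measurable_fun setT g := meas_cos k.
have i1 := finite_measure_integrable_cst mu 1 measurableT.
have ig : mu.-integrable setT (EFin \o g).
  apply: (@le_integrable _ _ _ mu setT measurableT _ (EFin \o cst 1)) => //.
    exact/measurable_EFinP.
  by move=> x _ /=; rewrite lee_fin normr1 cos_max.
have mh : measurable_fun setT (fun x => (1 - g x)%:E).
  by apply/measurable_EFinP; apply: measurable_funB => //; exact: measurable_cst.
have : (\int[mu]_x `|(1 - g x)%:E| = 0)%E.
  transitivity (\int[mu]_x ((cst 1 x)%:E - (g x)%:E))%E.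
    apply: eq_integral => x _; rewrite gee0_abs // lee_fin subr_ge0.
    exact: cos_le1.
  rewrite integralB_EFin //.
  have -> : (\int[mu]_x (cst 1 x)%:E = 1)%E.
    rewrite -[LHS]/(\int[mu]_x (cst 1%:E x))%E integral_cst // mul1e; exact: probability_setT.
  by rewrite /g h subee.
move/(ae_eq_integral_abs mu measurableT mh) => H.
apply: filterS H => x /(_ I) /= /eqP; rewrite eqe subr_eq0 => /eqP /esym.
exact: cos2pi_eq1.
Qed.

End M.

Section L.
Variable n : nat.

Lemma int_to_rat_mxM m p q (A : 'M[int]_(m, p)) (C : 'M[int]_(p, q)) :
  int_to_rat_mx (A *m C) = int_to_rat_mx A *m int_to_rat_mx C.
Proof. by rewrite /int_to_rat_mx map_mxM. Qed.

Lemma detW_neq0 (B : 'I_n -> 'M[int]_n) (k : 'cV[int]_n) :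
  strongly_independent B -> k != 0 ->
  \det (\matrix_(i, j) (B i *m k) j 0) != 0.
Proof.
move=> HB k0.
set W := \matrix_(i, j) (B i *m k) j 0.
have kq0 : int_to_rat_mx k != 0.
  apply: contra k0 => /eqP h; apply/eqP/matrixP => i j.
  have := congr1 (fun M : 'M[rat]_(n, 1) => M i j) h; rewrite !mxE => /eqP.
  by rewrite intr_eq0 => /eqP.
have := HB _ kq0.
pose f := fun i => int_to_rat_mx (B i) *m int_to_rat_mx k.
have -> : [seq int_to_rat_mx (B i) *m int_to_rat_mx k | i <- enum 'I_n] =
          map_tuple f (ord_tuple n) by rewrite -[enum 'I_n]val_ord_tuple.
move/freeP => H.
apply/negP => /eqP d0.
have : \det (int_to_rat_mx W) == 0 by rewrite /int_to_rat_mx det_map_mx d0 rmorph0.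
case/det0P => u u0 uW.
have Hs : \sum_(i < n) u 0 i *: (map_tuple f (ord_tuple n))`_i = 0.
  apply/matrixP => a b.
  have e := congr1 (fun M : 'M[rat]_(1, n) => M 0 a) uW; rewrite /= !mxE in e.
  rewrite (ord1 b) summxE [RHS]mxE -[RHS]e; apply: eq_bigr => i _.
  rewrite !mxE.
  by rewrite -tnth_nth tnth_map tnth_ord_tuple /f -int_to_rat_mxM !mxE.
have := H _ Hs.
move=> {}H; move/eqP: u0; apply; apply/matrixP => a b.
by rewrite (ord1 a) H mxE.
Qed.

Lemma det_coord (R : realType) (B : 'I_n -> 'M[int]_n) (k : 'cV[int]_n) (x : 'cV[R]_n) :
  (forall i, exists z : int, kdot (B i *m k) x = z%:~R) ->
  forall j, exists c : int,
    (\det (\matrix_(i, j) (B i *m k) j 0))%:~R * x j 0 = c%:~R.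
Proof.
move=> /choice [z hz] j.
set W := \matrix_(i, j) (B i *m k) j 0.
exists (\sum_i \adj W j i * z i).
rewrite [RHS]rmorph_sum /=.
under [RHS]eq_bigr do rewrite intrM -hz /kdot mulr_sumr.
rewrite exchange_big /=.
under eq_bigr => l _.
  under eq_bigr do rewrite mulrA -rmorphM /=.
  rewrite -mulr_suml -rmorph_sum /=.
  have -> : \sum_i \adj W j i * (B i *m k) l 0 = (\adj W *m W) j l.
    by rewrite mxE; apply: eq_bigr => i _; rewrite [W i l]mxE.
  rewrite mul_adj_mx mxE.
  over.
rewrite (bigD1 j) //= eqxx mulr1n big1 ?addr0 // => l /negbTE.
by rewrite eq_sym => ->; rewrite mulr0n mul0r.
Qed.

Definition ptset (R : realType) (d : nat) : seq 'cV[R]_n :=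
  [seq \col_j (((f j : nat)%:R / d%:R) : R) | f : {ffun 'I_n -> 'I_d} <- enum {ffun 'I_n -> 'I_d}].

Lemma in_ptset (R : realType) (D : int) (x : 'cV[R]_n) : D != 0 ->
  fund_domain x -> (forall j, exists c : int, D%:~R * x j 0 = c%:~R) ->
  x \in ptset R `|D|%N.
Proof.
move=> D0 fx hc.
set d := `|D|%N.
have d0 : (0 < d)%N by rewrite absz_gt0.
have dR : (d%:R : R) = `|D%:~R| by rewrite natr_absz intr_norm.
pose m (j : 'I_n) := absz (Num.floor ((d%:R : R) * x j 0)).
have em : forall j, ((m j)%:R : R) = d%:R * x j 0.
  move=> j; have [c hcj] := hc j.
  rewrite /m.
  have -> : (d%:R : R) * x j 0 = (`|c|%N)%:R.
    have xj0 : 0 <= x j 0 by case/andP: (fx j).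
    by rewrite dR -[x j 0]ger0_norm // -normrM hcj natr_absz intr_norm.
  by rewrite (_ : ((`|c|%N)%:R : R) = (Posz `|c|%N)%:~R) // intrKfloor.
have mlt : forall j, (m j < d)%N.
  move=> j; rewrite -(ltr_nat R) em.
  have /andP[_ xj1] := fx j.
  by rewrite -[X in _ < X]mulr1 ltr_pM2l // ltr0n.
apply/mapP; exists [ffun j => Ordinal (mlt j)]; first by rewrite mem_enum.
apply/matrixP => j b; rewrite (ord1 b) !mxE ffunE /= em [_ * x j 0]mulrC mulfK //.
by rewrite pnatr_eq0 -lt0n.
Qed.
End L.


Section Fin.
Variables (R : realType) (n : nat).

Lemma meas_pre (f : borelRn R n -> R) : measurable_fun setT f ->
  forall Y : set R, measurable Y -> measurable (f @^-1` Y).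
Proof. by move=> mf Y mY; rewrite -[_ @^-1` _]setTI; exact: mf. Qed.

Lemma meas_fund : measurable (@fund_domain R n).
Proof.
have -> : @fund_domain R n =
    \bigcap_(j in [set: 'I_n]) ((fun x : borelRn R n => x j 0) @^-1` `[0, 1[%classic).
  apply/seteqP; split => x /=.
    by move=> h j _ /=; rewrite in_itv /=; exact: h.
  by move=> h j; have := h j I; rewrite /= in_itv.
apply: fin_bigcap_measurable; first exact: finite_finset.
by move=> j _; apply: meas_pre; [exact: meas_coord|exact: measurable_itv].
Qed.

Lemma meas_pt (a : 'cV[R]_n) : measurable ([set a] : set (borelRn R n)).
Proof.
have -> : ([set a] : set (borelRn R n)) =
    \bigcap_(j in [set: 'I_n]) ((fun x : borelRn R n => x j 0) @^-1` [set a j 0]).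
  apply/seteqP; split => x /=.
    by move=> -> j _.
  move=> h; apply/matrixP => j b; rewrite (ord1 b); exact: h.
apply: fin_bigcap_measurable; first exact: finite_finset.
by move=> j _; apply: meas_pre; [exact: meas_coord|exact: measurable_set1].
Qed.

Lemma meas_seq (s : seq 'cV[R]_n) : measurable ([set` s] : set (borelRn R n)).
Proof.
elim: s => [|a s IH]; first by rewrite set_nil.
have -> : ([set` a :: s] : set (borelRn R n)) = [set a] `|` [set` s].
  apply/seteqP; split => x /=; rewrite inE.
    by case/orP => [/eqP ->|xs]; [left|right].
  by case => [->|xs]; rewrite ?eqxx ?xs ?orbT.
exact: measurableU (meas_pt a) IH.
Qed.

End Fin.

Theorem lemma4p4 (R : realType) (n : nat)
  (mu : probability (borelRn R n) R)
  (Hmu : mu (@fund_domain R n) = 1%E)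
  (B : 'I_n -> 'M[int]_n)
  (HB : strongly_independent B) :
  (exists k : 'cV[int]_n, k != 0 /\ forall i : 'I_n, fourier_eq1 mu (B i *m k)) ->
  finitely_supported mu.
Proof.
move=> [k [k0 hk]].
have hall : {ae mu, forall x, forall i, exists z : int, kdot (B i *m k) x = z%:~R}.
  apply: filter_forall; last by move=> i; exact: ae_int (hk i).1.
have hfund : {ae mu, forall x, @fund_domain R n x}.
  exists (~` @fund_domain R n); split => //.
  - exact: (measurableC (@meas_fund R n)).
  - by rewrite probability_setC ?Hmu ?subee //; exact: (@meas_fund R n).
set D := \det (\matrix_(i, j) (B i *m k) j 0).
have D0 : D != 0 := detW_neq0 HB k0.
have hS : {ae mu, forall x, x \in ptset n R `|D|%N}.
  have FF := ae_filter_ringOfSetsType mu.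
  apply: (@filterS _ _ FF _ _ _ (@filterI _ _ FF _ _ hall hfund)) => x [h1 h2].
  exact: in_ptset D0 h2 (det_coord h1).
case: hS => N [mN N0 sub].
exists (ptset n R `|D|%N).
apply/eqP; rewrite eq_le probability_le1 ?meas_seq //=.
have <- : mu (~` N) = 1%E by rewrite probability_setC // N0 sube0.
apply: le_measure; rewrite ?inE; [exact: measurableC|exact: meas_seq|].
move=> x Nx /=; apply: contrapT => nx; exact: Nx (sub _ nx).
exact: meas_seq.
Qed.
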